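(* Let $(\mathcal S,\mathcal A,P,r)$ be any finite MDP (general/multichain) and let $(g^\star,h^\star)$ be a solution of the modified Bellman equations. Let $V^0\in\mathbb R^n$ and let $V^k=\tfrac12 V^{k-1}+\tfrac12 TV^{k-1}$ for $k\ge 1$ (Relaxed Value Iteration with $\lambda_k=1/2$), and for each $k$ let $\pi_k$ be a greedy policy, i.e. $T^{\pi_k}V^k=TV^k$. Let $\mathcal D$ be the set of all deterministic policies and \[\epsilon=\inf_{\pi\in\mathcal D\setminus\{\pi\,:\,\mathcal P^{\pi}g^\star=g^\star\}}\|\mathcal P^{\pi}g^\star-g^\star\|_\infty\in(0,\infty],\] with the convention $\epsilon=+\infty$ if the index set is empty, and let $K=\big(2\|r\|_\infty+4\|V^0\|_\infty+16\|V^0-h^\star\|_\infty+2\|g^\star\|_\infty\big)/\epsilon$. Then for every $k>K$, \[\|g^\star-g^{\pi_k}\|_\infty\le\|TV^k-V^k-g^\star\|_\infty\le\frac{4\|V^0-h^\star\|_\infty}{\sqrt{\varpi\,(k-K)}},\] where $\varpi=3.141592\ldots$ is the circle constant.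
   Context: An MDP $(\mathcal S,\mathcal A,P,r)$ has finite state space $\mathcal S$ with $|\mathcal S|=n$ (functions on $\mathcal S$ are identified with vectors in $\mathbb R^n$), finite action space $\mathcal A$, transition probabilities $P(s'\mid s,a)$ and bounded reward $r:\mathcal S\times\mathcal A\to\mathbb R$, $\|r\|_\infty=\max_{s,a}|r(s,a)|$. A policy $\pi$ assigns to each state a distribution $\pi(\cdot\mid s)$ on $\mathcal A$; $r^\pi(s)=\sum_a\pi(a\mid s)r(s,a)$ and $\mathcal P^\pi(s,s')=\sum_a\pi(a\mid s)P(s'\mid s,a)$. The average reward of $\pi$ is $g^\pi(s)=\liminf_{T\to\infty}\frac1T\mathbb E_\pi[\sum_{t=0}^{T-1}r(s_t,a_t)\mid s_0=s]$ and $g^\star(s)=\max_\pi g^\pi(s)$. The Bellman consistency operator is $T^\pi V=r^\pi+\mathcal P^\pi V$ and the Bellman optimality operator is $(TV)(s)=\max_{a}\{r(s,a)+\sum_{s'}P(s'\mid s,a)V(s')\}$. A pair $(g,h)\in\mathbb R^n\times\mathbb R^n$ solves the modified Bellman equations if $\max_a\sum_{s'}P(s'\mid s,a)g(s')=g(s)$ and $\max_a\{r(s,a)+\sum_{s'}P(s'\mid s,a)h(s')\}=h(s)+g(s)$ for all $s$, and some policy attains both maxima simultaneously; solutions exist and the first component of any solution equals $g^\star$. A policy is deterministic if each $\pi(\cdot\mid s)$ is a point mass. *)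

(* Defs.v *)
From HB Require Import structures.
From mathcomp Require Import all_boot all_order all_algebra.
From mathcomp Require Import all_classical all_reals all_analysis.
Set Implicit Arguments. Unset Strict Implicit. Unset Printing Implicit Defensive.
Import Order.TTheory GRing.Theory Num.Theory.
Local Open Scope classical_set_scope.
Local Open Scope ring_scope.

Section MDP.
Variables (R : realType) (n : nat) (A : finType).
Variable P : 'I_n -> A -> 'I_n -> R.   (* P s a s' = P(s' | s, a) *)
Variable r : 'I_n -> A -> R.

Definition supnorm (v : 'I_n -> R) : R := \big[Num.max/0]_(s : 'I_n) `|v s|.

Definition is_transition : Prop :=
  (forall s a s', 0 <= P s a s') /\ (forall s a, \sum_(s' : 'I_n) P s a s' = 1).

Definition rnorm : R := \big[Num.max/0]_(s : 'I_n) \big[Num.max/0]_(a : A) `|r s a|.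

(* a (stationary, randomized) policy: pi s a = pi(a | s) *)
Definition is_policy (pi : 'I_n -> A -> R) : Prop :=
  (forall s a, 0 <= pi s a) /\ (forall s, \sum_(a : A) pi s a = 1).

Definition is_deterministic (pi : 'I_n -> A -> R) : Prop :=
  is_policy pi /\ forall s, exists a0 : A, forall a, pi s a = (a == a0)%:R.

Definition rpi (pi : 'I_n -> A -> R) (s : 'I_n) : R := \sum_(a : A) pi s a * r s a.

Definition Ppi (pi : 'I_n -> A -> R) (V : 'I_n -> R) (s : 'I_n) : R :=
  \sum_(s' : 'I_n) (\sum_(a : A) pi s a * P s a s') * V s'.

Definition Tpi (pi : 'I_n -> A -> R) (V : 'I_n -> R) (s : 'I_n) : R :=
  rpi pi s + Ppi pi V s.

(* max over the (nonempty, witnessed by a0) finite action set *)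
Definition amax (a0 : A) (f : A -> R) : R := \big[Num.max/f a0]_(a : A) f a.

Definition Topt (a0 : A) (V : 'I_n -> R) (s : 'I_n) : R :=
  amax a0 (fun a => r s a + \sum_(s' : 'I_n) P s a s' * V s').

(* average reward g^pi(s) = liminf_T (1/T) E_pi[sum_{t<T} r(s_t,a_t) | s_0 = s],
   where E_pi[r(s_t,a_t) | s_0 = s] = ((P^pi)^t r^pi)(s) *)
Definition gpi (pi : 'I_n -> A -> R) (s : 'I_n) : R :=
  limn_inf (fun T : nat =>
    (T%:R)^-1 * \sum_(t < T) (iter t (Ppi pi) (rpi pi)) s).

Definition modified_bellman (a0 : A) (g h : 'I_n -> R) : Prop :=
  (forall s, amax a0 (fun a => \sum_(s' : 'I_n) P s a s' * g s') = g s) /\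
  (forall s, Topt a0 h s = h s + g s) /\
  exists pi, is_policy pi /\
    (forall s, Ppi pi g s = amax a0 (fun a => \sum_(s' : 'I_n) P s a s' * g s')) /\
    (forall s, Tpi pi h s = Topt a0 h s).

Definition RVI (a0 : A) (V0 : 'I_n -> R) (k : nat) : 'I_n -> R :=
  iter k (fun V s => 2^-1 * V s + 2^-1 * Topt a0 V s) V0.

(* epsilon = inf over deterministic policies with P^pi g <> g of ||P^pi g - g||,
   as an extended real (inf of the empty set is +oo) *)
Definition eps_gap (g : 'I_n -> R) : \bar R :=
  ereal_inf [set (supnorm (fun s => Ppi pi g s - g s))%:E |
              pi in [set pi | is_deterministic pi /\ Ppi pi g <> g]].

(* K = C / epsilon, with C / +oo = 0 *)
Definition Kconst (g h V0 : 'I_n -> R) : R :=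
  let C := 2 * rnorm + 4 * supnorm V0 + 16 * supnorm (fun s => V0 s - h s)
           + 2 * supnorm g in
  match eps_gap g with
  | EFin e => C / e
  | _ => 0
  end.
End MDP.

(* Main.v *)
Require Import Defs.
From HB Require Import structures.
From mathcomp Require Import all_boot all_order all_algebra.
From mathcomp Require Import all_classical all_reals all_analysis.
From mathcomp Require Import ring lra zify.
From Stdlib Require Import Lia.
Import Order.TTheory GRing.Theory Num.Theory.
Set Implicit Arguments. Unset Strict Implicit. Unset Printing Implicit Defensive.
Local Open Scope ring_scope.

Section Wallis.
Variable R : realType.

Fixpoint Gw (n : nat) : R -> R :=
  match n with
  | 0%N => id
  | 1%N => - (@cos R)
  | (m.+2)%N => (m.+1%:R / m.+2%:R) \*: Gw m - (m.+2%:R^-1) \*: ((@sin R) ^+ m.+1 * (@cos R))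
  end.

Lemma Gw_alg (k t s c : R) : c * c = 1 - s * s -> k + 1 != 0 ->
  (k / (k + 1)) * t - (k + 1)^-1 * ((t * s) * - s + c * ((k * t) * c)) = t * s * s.
Proof.
move=> cc k1.
have -> : c * ((k * t) * c) = k * t * (c * c) by ring.
rewrite cc. field. done.
Qed.

Lemma Gw_derive2 n (x : R) : is_derive x 1 (Gw n) (sin x ^+ n) /\ is_derive x 1 (Gw n.+1) (sin x ^+ n.+1).
Proof.
elim: n => [|n [IH0 IH]].
  split; first by apply: is_derive_eq; rewrite expr0.
  by apply: is_derive_eq; rewrite expr1 opprK.
split => //.
apply: is_derive_eq.
rewrite /= !fctE.
have cc : cos x * cos x = 1 - sin x * sin x.
  by have := cos2Dsin2 x; rewrite !expr2 => <-; ring.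
have k1 : n.+1%:R + 1 != 0 :> R by rewrite -mulrSr pnatr_eq0.
have := @Gw_alg n.+1%:R (sin x ^+ n) (sin x) (cos x) cc k1.
rewrite -!exprSr -mulrSr => <-.
rewrite /GRing.scale /=. ring.
Qed.

Lemma Gw_derive n (x : R) : is_derive x 1 (Gw n) (sin x ^+ n).
Proof. by case: (Gw_derive2 n x). Qed.


Definition Iw n := Gw n (pi / 2) - Gw n 0.

Lemma Iw0 : Iw 0 = pi / 2.
Proof. by rewrite /Iw /= subr0. Qed.

Lemma Iw1 : Iw 1 = 1.
Proof. by rewrite /Iw /= !fctE cos_pihalf cos0 oppr0 opprK add0r. Qed.

Lemma IwSS m : Iw m.+2 = (m.+1%:R / m.+2%:R) * Iw m.
Proof.
rewrite /Iw /= /GRing.scale_fun !fctE cos_pihalf sin0 expr0n /= !mul0r !mulr0 /GRing.scale /=.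
by rewrite !mulr0 !subr0 mulrBr.
Qed.

Lemma Iw_le m : Iw m.*2.+2 <= Iw m.*2.+1.
Proof.
rewrite /Iw -subr_ge0.
have -> : Gw m.*2.+1 (pi / 2) - Gw m.*2.+1 0 - (Gw m.*2.+2 (pi / 2) - Gw m.*2.+2 0)
  = (Gw m.*2.+1 - Gw m.*2.+2) (pi / 2) - (Gw m.*2.+1 - Gw m.*2.+2) 0.
  by rewrite !fctE; ring.
rewrite subr_ge0.
have dH (x : R) : is_derive x 1 (Gw m.*2.+1 - Gw m.*2.+2) (sin x ^+ m.*2.+1 - sin x ^+ m.*2.+2).
  by apply: is_deriveB; apply: Gw_derive.
have p0 : (0 : R) <= pi / 2 by rewrite divr_ge0 // pi_ge0.
apply: (@ger0_derive1_ndecr _ _ 0 (pi / 2)) => //.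
- move=> x; rewrite in_itv /= => /andP[x0 xp].
  rewrite derive1E derive_val.
  have s0 : 0 < sin x by apply: sin_gt0_pihalf; rewrite x0 xp.
  have -> : sin x ^+ m.*2.+1 - sin x ^+ m.*2.+2 = sin x ^+ m.*2.+1 * (1 - sin x).
    by rewrite [in X in _ - X]exprSr; ring.
  rewrite mulr_ge0 //; first by rewrite exprn_ge0 // ltW.
- by apply: derivable_within_continuous => x _; have [] := dH x.
Qed.

Fixpoint ww (m : nat) : R :=
  match m with
  | 0%N => 1
  | m'.+1 => ww m' * (m'.*2.+1%:R / m'.*2.+2%:R)
  end.

Lemma ww_gt0 m : 0 < ww m.
Proof. elim: m => //= m IH; rewrite mulr_gt0 // divr_gt0 // ltr0n. Qed.

Lemma Iw_even m : Iw m.*2 = pi / 2 * ww m.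
Proof.
elim: m => [|m IH]; first by rewrite Iw0 mulr1.
rewrite doubleS IwSS IH /=; ring.
Qed.

Lemma Iw_odd m : Iw m.*2.+1 * (m.*2.+1%:R * ww m) = 1.
Proof.
elim: m => [|m IH]; first by rewrite Iw1 /= !mul1r.
rewrite doubleS IwSS /= -[RHS]IH.
have h1 : (m.*2.+2%:R : R) != 0 by rewrite pnatr_eq0.
have h2 : (m.*2.+3%:R : R) != 0 by rewrite pnatr_eq0.
field. by rewrite -!natrD !pnatr_eq0.
Qed.

Lemma wallis_ineq m : pi * ww m.+1 ^+ 2 * m.+1%:R <= 1.
Proof.
have := Iw_le m.
rewrite -doubleS Iw_even.
have wp := ww_gt0 m.
have e : Iw m.*2.+1 = (m.*2.+1%:R * ww m)^-1.
  apply: (mulIf (x := m.*2.+1%:R * ww m)); first by rewrite mulf_neq0 ?pnatr_eq0 // gt_eqF.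
  by rewrite Iw_odd mulVf // mulf_neq0 ?pnatr_eq0 // gt_eqF.
rewrite e /= => H.
have q : 0 < (m.*2.+1%:R : R) * ww m by rewrite mulr_gt0 // ltr0n.
have H2 := H; rewrite -(ler_pM2r q) mulVf ?gt_eqF // in H2.
apply: le_trans H2 => /=.
have -> : (m.*2.+2%:R : R) = 2 * m.+1%:R by rewrite -natrM mul2n doubleS.
have h1 : (m.+1%:R : R) != 0 by rewrite pnatr_eq0.
rewrite le_eqVlt; apply/orP; left; apply/eqP. rewrite expr2. field. by rewrite addrC natr1 pnatr_eq0.
Qed.

End Wallis.

Section SN.
Variables (R : realType) (n : nat).
Implicit Types (u v w : 'I_n -> R).

Lemma sn_ub v s : `|v s| <= supnorm v.
Proof. exact: (le_bigmax _ (fun s => `|v s|)). Qed.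

Lemma sn_le v c : 0 <= c -> (forall s, `|v s| <= c) -> supnorm v <= c.
Proof. by move=> c0 H; apply: bigmax_le. Qed.

Lemma sn_ge0 v : 0 <= supnorm v.
Proof.
rewrite /supnorm; apply: (big_ind (fun x => 0 <= x)) => //.
by move=> x y x0 y0; rewrite le_max x0.
Qed.

Lemma sn_0 v : supnorm (fun s => v s - v s) = 0.
Proof.
apply/le_anti; rewrite sn_ge0 andbT; apply: sn_le => // s.
by rewrite subrr normr0.
Qed.

Lemma sn_sym u w : supnorm (fun s => u s - w s) = supnorm (fun s => w s - u s).
Proof. by apply: eq_bigr => s _; rewrite distrC. Qed.

Lemma sn_avg (p q1 q2 : 'I_n -> R) :
  supnorm (fun s => p s - (2^-1 * q1 s + 2^-1 * q2 s)) <=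
  2^-1 * supnorm (fun s => p s - q1 s) + 2^-1 * supnorm (fun s => p s - q2 s).
Proof.
apply: sn_le; first by rewrite addr_ge0 // mulr_ge0 // sn_ge0.
move=> s.
have -> : p s - (2^-1 * q1 s + 2^-1 * q2 s) = 2^-1 * (p s - q1 s) + 2^-1 * (p s - q2 s).
  by field.
apply: le_trans (ler_normD _ _) _.
rewrite !normrM ger0_norm //.
by apply: lerD; apply: ler_wpM2l => //; apply: (sn_ub (fun s => p s - _)).
Qed.
End SN.

Section Binom.
Variables (R : realType) (n : nat).

Definition Fb (m j : nat) : nat := \sum_(i < j) 'C(m, i).

Lemma Fb0 m : Fb m 0 = 0%N.
Proof. by rewrite /Fb big_ord0. Qed.

Lemma FbS m j : Fb m.+1 j.+1 = (Fb m j.+1 + Fb m j)%N.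
Proof.
elim: j => [|j IH]; first by rewrite /Fb !big_ord1 !big_ord0 !bin0.
rewrite [LHS]/Fb big_ord_recr /= -/(Fb m.+1 j.+1) IH binS.
rewrite [Fb m j.+2]/Fb big_ord_recr /= -/(Fb m j.+1).
rewrite [Fb m j.+1]/Fb big_ord_recr /= -/(Fb m j).

lia.
Qed.

Lemma Fb_full m : Fb m m.+1 = (2 ^ m)%N.
Proof.
elim: m => [|m IH]; first by rewrite /Fb big_ord1.
rewrite FbS expnS.
have -> : Fb m m.+2 = Fb m m.+1 by rewrite /Fb big_ord_recr /= bin_small // addn0.
by rewrite IH mul2n -addnn.
Qed.

Definition fk (a b : nat) : R :=
  ((Fb (a + b) b)%:R - (Fb (a + b) a)%:R) / 2 ^+ (a + b).

Definition mk (c a : nat) : R := if a is a'.+1 then fk a' c.+1 else 1.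

Lemma fk_aa a : fk a a = 0.
Proof. by rewrite /fk subrr mul0r. Qed.

Lemma fk_0S b : fk 0 b.+1 = 2^-1 * fk 0 b + 2^-1.
Proof.
rewrite /fk !add0n !Fb0 !subr0 FbS Fb_full natrD natrX exprS.
have h : (2 : R) ^+ b != 0 by rewrite expf_neq0.
field. by rewrite h.
Qed.

Lemma fk_SS a b : fk a.+1 b.+1 = 2^-1 * fk a.+1 b + 2^-1 * fk a b.+1.
Proof.
rewrite /fk !addSn !addnS !FbS !natrD exprS.
have h : (2 : R) ^+ (a + b).+1 != 0 by rewrite expf_neq0.
field. by rewrite h.
Qed.


Lemma KM_main (x y : nat -> 'I_n -> R) (D : R) :
  (forall k s, x k.+1 s = 2^-1 * x k s + 2^-1 * y k s) ->
  (forall i j, supnorm (fun s => y i s - y j s) <= supnorm (fun s => x i s - x j s)) ->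
  (forall j, supnorm (fun s => y j s - x 0%N s) <= D) ->
  forall N,
  (forall a b, (a <= b)%N -> (2 * (a + b) <= N)%N ->
     supnorm (fun s => x a s - x b s) <= D * fk a b) /\
  (forall c a, (a <= c)%N -> ((2 * (c + a)).+1 <= N)%N ->
     supnorm (fun s => y c s - x a s) <= D * mk c a).
Proof.
move=> hx hy hD; elim=> [|N [IH1 IH2]].
  split; first by move=> [|a] [|b] //= _ _; rewrite fk_aa mulr0 sn_0.
  by [].
split.
  move=> a b ab hN.
  case: (ltngtP a b) ab => // [altb _|-> _]; last first.
    by rewrite fk_aa mulr0 sn_0.
  case: b altb hN => // b altb hN.
  have ab' : (a <= b)%N by [].
  have e : supnorm (fun s => x a s - x b.+1 s) =
           supnorm (fun s => x a s - (2^-1 * x b s + 2^-1 * y b s)).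
    by apply: eq_bigr => s _; rewrite hx.
  rewrite e; apply: le_trans (sn_avg (x a) (x b) (y b)) _.
  have h1 := IH1 a b ab' ltac:(lia).
  have h2 := IH2 b a ab' ltac:(lia).
  rewrite sn_sym in h2.
  have -> : D * fk a b.+1 = 2^-1 * (D * fk a b) + 2^-1 * (D * mk b a).
    case: a {altb hN h1 h2 ab' e} => [|a] /=; first by rewrite fk_0S; ring.
    by rewrite fk_SS; ring.
  by apply: lerD; apply: ler_wpM2l.
move=> c a ac hN.
case: a ac hN => [|a] ac hN; first by rewrite /= mulr1.
have ac' : (a <= c)%N by lia.
have e : supnorm (fun s => y c s - x a.+1 s) =
         supnorm (fun s => y c s - (2^-1 * x a s + 2^-1 * y a s)).
  by apply: eq_bigr => s _; rewrite hx.
rewrite e; apply: le_trans (sn_avg (y c) (x a) (y a)) _.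
have h1 := IH2 c a ac' ltac:(lia).
have h2 := IH1 a c ac' ltac:(lia).
have h3 := hy c a.
rewrite sn_sym in h2.
have -> : D * mk c a.+1 = 2^-1 * (D * mk c a) + 2^-1 * (D * fk a c).
  case: a {ac hN h1 h2 h3 ac' e} => [|a] /=; first by rewrite fk_0S; ring.
  by rewrite fk_SS; ring.
apply: lerD; apply: ler_wpM2l => //.
exact: le_trans h3 h2.
Qed.

Lemma binc1 j : 'C(j.*2.+1, j.+1) = 'C(j.*2.+1, j).
Proof.
have -> : j.+1 = (j.*2.+1 - j)%N by rewrite -addnn; lia.
by rewrite bin_sub // -addnn; lia.
Qed.

Lemma binc j : 'C(j.*2.+2, j.+1) = (2 * 'C(j.*2.+1, j))%N.
Proof. by rewrite binS binc1 mul2n addnn. Qed.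

Lemma binc2 m : ('C(m.*2.+1, m) * m.+1 = m.*2.+1 * 'C(m.*2, m))%N.
Proof. by rewrite -binc1 mulnC -mul_bin_diag. Qed.

Lemma ww_binom m : ww R m * 4 ^+ m = ('C(m.*2, m))%:R.
Proof.
elim: m => [|m IH]; first by rewrite /= mulr1 bin0.
rewrite /= exprS.
have -> : ww R m * (m.*2.+1%:R / m.*2.+2%:R) * (4 * 4 ^+ m)
   = (ww R m * 4 ^+ m) * (4 * m.*2.+1%:R / m.*2.+2%:R) by ring.
rewrite IH doubleS binc natrM.
have -> : (m.*2.+2%:R : R) = 2 * m.+1%:R by rewrite -natrM mul2n doubleS.
have e := binc2 m.
have h1 : (m.+1%:R : R) != 0 by rewrite pnatr_eq0.
have e' : ('C(m.*2.+1, m))%:R = (m.*2.+1%:R * ('C(m.*2, m))%:R) / (m.+1%:R : R).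
  by apply: (mulIf h1); rewrite mulfVK // -!natrM e.
rewrite e'. field. by rewrite addrC natr1 pnatr_eq0.
Qed.

Lemma fk_diag k : fk k k.+2 = 2 * ww R k.+2.
Proof.
have num : (Fb (k.+1).*2 k.+2)%:R - (Fb (k.+1).*2 k)%:R = ('C((k.+1).*2.+1, k.+1))%:R :> R.
  rewrite /Fb !big_ord_recr /= -/(Fb _ k) binS !natrD; ring.
rewrite /fk.
have -> : (k + k.+2 = (k.+1).*2)%N by rewrite -addnn; lia.
rewrite num.
have h := ww_binom k.+2.
have h4 : (4 : R) ^+ k.+2 != 0 by rewrite expf_neq0.
have -> : ww R k.+2 = ('C(k.+2.*2, k.+2))%:R / 4 ^+ k.+2.
  by rewrite -h mulfK.
rewrite (doubleS k.+1) binc natrM exprS.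
have t : (2:R) ^+ 2 = 4 by rewrite expr2; lra.
have -> : (4:R) ^+ k.+1 = 2 ^+ (k.+1).*2 by rewrite -mul2n exprM t.
have h2 : (2 : R) ^+ (k.+1).*2 != 0 by rewrite expf_neq0.
field. by rewrite h2.
Qed.

Lemma KM_bound (x y : nat -> 'I_n -> R) (D : R) :
  (forall k s, x k.+1 s = 2^-1 * x k s + 2^-1 * y k s) ->
  (forall i j, supnorm (fun s => y i s - y j s) <= supnorm (fun s => x i s - x j s)) ->
  (forall j, supnorm (fun s => y j s - x 0%N s) <= D) ->
  forall k, supnorm (fun s => y k.+1 s - x k.+1 s) <= D * (2 * ww R k.+2).
Proof.
move=> hx hy hD k.
have [_ H] := KM_main hx hy hD (2 * (k.+1 + k.+1)).+1.
by have := H k.+1 k.+1 (leqnn _) (leqnn _); rewrite /= fk_diag.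
Qed.
End Binom.

Lemma ww_le (R : realType) (i : nat) (t : R) : 0 < t -> t <= i.+1%:R ->
  ww R i.+2 <= (Num.sqrt (pi * t))^-1.
Proof.
move=> t0 ti.
have wp := ww_gt0 R i.+2.
have pt : 0 < pi * t by rewrite mulr_gt0 // pi_gt0.
have wp' : 0 <= ww R i.+2 by exact: ltW.
have pt' : 0 <= pi * t by exact: ltW.
rewrite -(sqrtrV pt') -[ww R i.+2](ger0_norm wp') -sqrtr_sqr ler_sqrt; last by rewrite invr_ge0.
rewrite -(ler_pM2r pt) mulVf ?gt_eqF //.
apply: le_trans (wallis_ineq R i.+1).
have -> : ww R i.+2 ^+ 2 * (pi * t) = pi * ww R i.+2 ^+ 2 * t by ring.
apply: ler_wpM2l; first by rewrite mulr_ge0 ?pi_ge0 // sqr_ge0.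
by apply: le_trans ti _; rewrite ler_nat.
Qed.

Section Amax.
Variables (R : realType) (A : finType) (a0 : A).
Implicit Types (f : A -> R).

Lemma amax_ge f a : f a <= amax a0 f.
Proof. exact: (le_bigmax _ f). Qed.

Lemma amax_le f c : (forall a, f a <= c) -> amax a0 f <= c.
Proof. by move=> H; apply: bigmax_le. Qed.

Lemma amax_ex f : exists a, amax a0 f = f a.
Proof.
rewrite /amax; apply: (big_ind (fun x => exists a, x = f a)); first by exists a0.
  move=> x y [a ->] [b ->]; case: (leP (f a) (f b)) => H.
    by exists b.
  by exists a.
by move=> a _; exists a.
Qed.

Lemma wsum_eq (w f : A -> R) M : (forall a, 0 <= w a) -> \sum_a w a = 1 ->
  (forall a, f a <= M) -> \sum_a w a * f a = M -> forall a, w a != 0 -> f a = M.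
Proof.
move=> w0 w1 fM sM a wa.
have H : \sum_a0 w a0 * (M - f a0) = 0.
  under eq_bigr do rewrite mulrBr.
  by rewrite sumrB -mulr_suml w1 mul1r sM subrr.
have hpos : forall i, predT i -> 0 <= w i * (M - f i).
  by move=> i _; rewrite mulr_ge0 // subr_ge0.
have := psumr_eq0P hpos H (i := a) isT => /eqP.
by rewrite mulf_eq0 (negbTE wa) /= subr_eq0 => /eqP ->.
Qed.

Lemma wsum_ex (w : A -> R) : \sum_a w a = 1 -> exists a, w a != 0.
Proof.
move=> w1; apply/not_existsP => H.
have : \sum_a w a = 0 by apply: big1 => a _; apply/eqP/negP => /negP /(H a).
by rewrite w1 => /eqP; rewrite oner_eq0.
Qed.
End Amax.

Section Liminf.
Variable R : realType.
Implicit Types (u : nat -> R).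
Local Open Scope classical_set_scope.

Lemma arch_N (M e : R) : 0 <= M -> 0 < e -> forall T : nat,
  ((Num.trunc (M / e)).+1 <= T)%N -> M / T%:R <= e.
Proof.
move=> M0 e0 T hT.
have Me0 : 0 <= M / e by rewrite divr_ge0 // ltW.
have [_ h1] := andP (truncn_itv Me0).
have hT' : (Num.trunc (M / e)).+1%:R <= T%:R :> R by rewrite ler_nat.
have T0 : 0 < T%:R :> R by rewrite ltr0n; lia.
rewrite ler_pdivrMr // -ler_pdivrMl //.
by rewrite mulrC ltW // (lt_le_trans h1 hT').
Qed.

Lemma liminf_lb_ev u lo : bounded_fun u ->
  (forall e, 0 < e -> exists N, forall k, (N <= k)%N -> lo - e <= u k) -> lo <= limn_inf u.
Proof.
move=> bu H; rewrite limn_infE //.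
apply/ler_addgt0Pr => e e0.
have [N hN] := H e e0.
rewrite -lerBlDr.
have h1 : lo - e <= infs u N.
  apply: lb_le_inf; first by exists (u N); exists N => /=.
  by move=> _ [k /= hk <-]; apply: hN.
apply: le_trans h1 _.
apply: ub_le_sup; last by exists N.
exact: bounded_fun_has_ubound_infs.
Qed.

Lemma liminf_ub_ev u hi : bounded_fun u ->
  (forall e, 0 < e -> forall N, exists2 k, (N <= k)%N & u k <= hi + e) -> limn_inf u <= hi.
Proof.
move=> bu H; rewrite limn_infE //.
apply: ge_sup; first by exists (infs u 0); exists 0%N.
move=> _ [N _ <-].
apply/ler_addgt0Pr => e e0.
have [k hk hu] := H e e0 N.
apply: le_trans hu.
apply: ge_inf; last by exists k.
exact/has_lbound_sdrop/bounded_fun_has_lbound.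
Qed.

Lemma liminf_close (a : nat -> R) (l E M B : R) : 0 <= E -> 0 <= M ->
  (forall T, (0 < T)%N -> `|a T - l| <= E + M / T%:R) ->
  (forall T, `|a T| <= B) ->
  `|l - limn_inf a| <= E.
Proof.
move=> E0 M0 H hb.
have bu : bounded_fun a.
  exists B; split; first exact: num_real.
  by move=> M1 hM T _ /=; apply: le_trans (hb T) (ltW hM).
rewrite ler_norml; apply/andP; split.
  suff : limn_inf a <= l + E by lra.
  apply: liminf_ub_ev => // e e0 N.
  exists (maxn N (Num.trunc (M / e)).+1); first by apply: leq_maxl.
  have hT := arch_N M0 e0 (leq_maxr N (Num.trunc (M / e)).+1).
  have := H (maxn N (Num.trunc (M / e)).+1) ltac:(lia).
  rewrite ler_norml => /andP[_]; lra.
suff : l - E <= limn_inf a by lra.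
apply: liminf_lb_ev => // e e0.
exists (Num.trunc (M / e)).+1 => k hk.
have hT := arch_N M0 e0 hk.
have := H k ltac:(lia).
rewrite ler_norml => /andP[h1 _]; lra.
Qed.
End Liminf.

Section MDP.
Variables (R : realType) (n : nat) (A : finType) (a0 : A).
Variables (P : 'I_n -> A -> 'I_n -> R) (r : 'I_n -> A -> R).
Hypothesis hP : is_transition P.

Definition PV s a (V : 'I_n -> R) := \sum_(s' : 'I_n) P s a s' * V s'.
Definition qv V s a := r s a + PV s a V.

Lemma Topt_E V s : Topt P r a0 V s = amax a0 (qv V s).
Proof. by []. Qed.

Lemma PV_ext s a u v : (forall x, u x = v x) -> PV s a u = PV s a v.
Proof. by move=> H; apply: eq_bigr => x _; rewrite H. Qed.

Lemma PVD s a u v : PV s a (fun x => u x + v x) = PV s a u + PV s a v.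
Proof. by rewrite /PV -big_split; apply: eq_bigr => x _; rewrite mulrDr. Qed.

Lemma PVB s a u v : PV s a (fun x => u x - v x) = PV s a u - PV s a v.
Proof. by rewrite /PV -sumrB; apply: eq_bigr => x _; rewrite mulrBr. Qed.

Lemma PVZ s a c u : PV s a (fun x => c * u x) = c * PV s a u.
Proof. by rewrite /PV mulr_sumr; apply: eq_bigr => x _; rewrite mulrCA. Qed.

Lemma PVc s a c : PV s a (fun _ => c) = c.
Proof. by rewrite /PV -mulr_suml (proj2 hP) mul1r. Qed.

Lemma PV_norm s a u : `|PV s a u| <= supnorm u.
Proof.
apply: le_trans (ler_norm_sum _ _ _) _.
rewrite -[supnorm u](PVc s a).
apply: ler_sum => x _; rewrite normrM ger0_norm ?(proj1 hP) //.
by apply: ler_wpM2l; [exact: (proj1 hP) | exact: sn_ub].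
Qed.

Lemma PV_ub s a u : PV s a u <= supnorm u.
Proof. by have := PV_norm s a u; rewrite ler_norml => /andP[]. Qed.

Lemma PV_lb s a u : - supnorm u <= PV s a u.
Proof. by have := PV_norm s a u; rewrite ler_norml => /andP[]. Qed.

Lemma Ppi_E pi V s : Ppi P pi V s = \sum_a pi s a * PV s a V.
Proof.
rewrite /Ppi /PV; under eq_bigr do rewrite mulr_suml.
rewrite exchange_big /=; apply: eq_bigr => a _; rewrite mulr_sumr.
by apply: eq_bigr => x _; rewrite mulrA.
Qed.

Lemma Tpi_E pi V s : Tpi P r pi V s = \sum_a pi s a * qv V s a.
Proof.
rewrite /Tpi Ppi_E /rpi -big_split; apply: eq_bigr => a _.
by rewrite /qv mulrDr.
Qed.


Variables (g h V0 : 'I_n -> R).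
Hypothesis hB : modified_bellman P r a0 g h.

Lemma g_ge s a : PV s a g <= g s.
Proof. by have [H _] := hB; rewrite -(H s); exact: (amax_ge a0 (fun a => PV s a g)). Qed.

Lemma hq_le s a : qv h s a <= h s + g s.
Proof. by have [_ [H _]] := hB; rewrite -(H s); exact: amax_ge. Qed.

Lemma bell_act s : exists b, PV s b g = g s /\ qv h s b = h s + g s.
Proof.
have [H1 [H2 [pib [[p0 p1] [H3 H4]]]]] := hB.
have [b hb] := wsum_ex (p1 s).
exists b; split.
  apply: (wsum_eq (w := pib s) (f := fun a => PV s a g)) => //.
  - by move=> a; apply: g_ge.
  - by rewrite -Ppi_E H3 H1.
apply: (wsum_eq (w := pib s) (f := fun a => qv h s a)) => //.
- by move=> a; apply: hq_le.
- by rewrite -Tpi_E H4 H2.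
Qed.

Definition V k := RVI P r a0 V0 k.
Definition tk (k : nat) : R := k%:R / 2.
Definition W k s := V k s - tk k * g s.
Definition rho k := supnorm (fun s => W k s - h s).
Definition R0 := supnorm (fun s => V0 s - h s).

Lemma V_S k s : V k.+1 s = 2^-1 * V k s + 2^-1 * Topt P r a0 (V k) s.
Proof. by rewrite /V /RVI iterS. Qed.

Lemma tk_ge0 k : 0 <= tk k.
Proof. by rewrite /tk divr_ge0. Qed.

Lemma PV_V k s a : PV s a (V k) = PV s a (W k) + tk k * PV s a g.
Proof.
rewrite -PVZ -PVD; apply: PV_ext => x.
by rewrite /W subrK.
Qed.

Lemma d_bound k s : `|Topt P r a0 (V k) s - tk k * g s - g s - h s| <= rho k.
Proof.
rewrite ler_norml; apply/andP; split.
  have [b [hb1 hb2]] := bell_act s.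
  have := amax_ge a0 (qv (V k) s) b; rewrite -Topt_E /qv PV_V hb1.
  have := PV_lb s b (fun x => W k x - h x); rewrite PVB.
  move: hb2; rewrite /qv => hb2.
  rewrite /rho; lra.
have [a ha] := amax_ex a0 (qv (V k) s).
rewrite Topt_E ha /qv PV_V.
have := g_ge s a; have := tk_ge0 k; move=> t0 ga.
have := hq_le s a; rewrite /qv => hq.
have := PV_ub s a (fun x => W k x - h x); rewrite PVB /rho.
have : tk k * PV s a g <= tk k * g s by apply: ler_wpM2l.
lra.
Qed.

Lemma W_S k s : W k.+1 s = 2^-1 * W k s + 2^-1 * (Topt P r a0 (V k) s - tk k * g s - g s).
Proof. by rewrite /W V_S /tk -natr1; field. Qed.

Lemma W0 s : W 0 s = V0 s.
Proof. by rewrite /W /tk mul0r mul0r subr0. Qed.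

Lemma rho_le k : rho k <= R0.
Proof.
elim: k => [|k IH].
  by rewrite /rho /R0 le_eqVlt; apply/orP; left; apply/eqP; apply: eq_bigr => s _; rewrite W0.
rewrite /rho; apply: sn_le; first by rewrite /R0 sn_ge0.
move=> s; rewrite W_S.
have := d_bound k s; have := sn_ub (fun s => W k s - h s) s.
rewrite -/(rho k) => h1 h2.
have -> : 2^-1 * W k s + 2^-1 * (Topt P r a0 (V k) s - tk k * g s - g s) - h s
  = 2^-1 * (W k s - h s) + 2^-1 * (Topt P r a0 (V k) s - tk k * g s - g s - h s) by field.
apply: le_trans (ler_normD _ _) _; rewrite !normrM ger0_norm //.
have : rho k <= R0 := IH.
move: h1 h2; set u := `|_|; set v := `|_|; lra.
Qed.


Definition pres s a := PV s a g == g s.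

Definition detp (c : 'I_n -> A) : 'I_n -> A -> R := fun s a => (a == c s)%:R.

Lemma sum_ind (c : A) (F : A -> R) : \sum_a (a == c)%:R * F a = F c.
Proof.
rewrite (bigD1 c) //= eqxx mul1r big1 ?addr0 // => a /negbTE ->.
by rewrite mul0r.
Qed.

Lemma detp_det c : is_deterministic (detp c).
Proof.
split; last by move=> s; exists (c s).
split; first by move=> s a; rewrite /detp ler0n.
move=> s; have := sum_ind (c s) (fun _ => 1).
by under eq_bigr do rewrite mulr1.
Qed.

Lemma Ppi_detp c V s : Ppi P (detp c) V s = PV s (c s) V.
Proof. by rewrite Ppi_E /detp sum_ind. Qed.

Lemma Ppi_det pi V s : is_deterministic pi -> exists a, Ppi P pi V s = PV s a V.
Proof.
move=> [_ H]; have [c hc] := H s; exists c.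
rewrite Ppi_E; under eq_bigr do rewrite hc.
by rewrite sum_ind.
Qed.

Lemma gap_ge0 s a : 0 <= g s - PV s a g.
Proof. by rewrite subr_ge0 g_ge. Qed.

Lemma gap_norm s a : `|PV s a g - g s| = g s - PV s a g.
Proof. by rewrite distrC ger0_norm // gap_ge0. Qed.

Lemma gap_lb e : eps_gap P g = e%:E -> forall s a, ~~ pres s a -> e <= g s - PV s a g.
Proof.
move=> he s a hna.
have [bf hbf] : exists bf : 'I_n -> A, forall x, PV x (bf x) g = g x /\ qv h x (bf x) = h x + g x.
  have [bf hbf] := @boolp.choice _ _ (fun x b => PV x b g = g x /\ qv h x b = h x + g x) bell_act.
  by exists bf.
pose c := fun x => if x == s then a else bf x.
pose pi := detp c.
have hpi : Ppi P pi g <> g.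
  move=> /(congr1 (fun f => f s)); rewrite Ppi_detp /c eqxx => E.
  by move: hna; rewrite /pres E eqxx.
have H : (eps_gap P g <= (supnorm (fun s => Ppi P pi g s - g s))%:E)%E.
  rewrite /eps_gap; apply: ereal_inf_lbound.
  by exists pi => //; split => //; apply: detp_det.
rewrite he lee_fin in H.
apply: le_trans H _; apply: sn_le; first exact: gap_ge0.
move=> x; rewrite Ppi_detp /c; case: eqP => [->|_]; first by rewrite gap_norm.
by rewrite (proj1 (hbf x)) subrr normr0 gap_ge0.
Qed.

Lemma all_pres_inf : (forall s a, pres s a) -> eps_gap P g = +oo%E.
Proof.
move=> H.
rewrite /eps_gap; set S := (X in ereal_inf X).
suff -> : S = set0 by rewrite ereal_inf0.
apply/seteqP; split => // y [pi [[[p0 p1] _] hpi] _]; exfalso; apply: hpi.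
apply: funext => s; rewrite Ppi_E.
under eq_bigr do rewrite (eqP (H s _)).
by rewrite -mulr_suml p1 mul1r.
Qed.

Lemma eps_pos e : eps_gap P g = e%:E -> 0 < e.
Proof.
move=> he.
pose F := fun p : 'I_n * A => g p.1 - PV p.1 p.2 g.
pose d := \big[Num.min/1]_(p : 'I_n * A | ~~ pres p.1 p.2) F p.
have d0 : 0 < d.
  rewrite /d; apply: (big_ind (fun x => 0 < x)) => //.
    by move=> x y x0 y0; rewrite lt_min x0.
  move=> [s a] /= hna; rewrite /F /= lt_def gap_ge0 andbT.
  by apply: contraNN hna; rewrite /pres subr_eq0 eq_sym.
suff : (d%:E <= e%:E)%E by rewrite lee_fin; apply: lt_le_trans.
rewrite -he; apply: le_ereal_inf_tmp => y [pi [hdet hpi] <-].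
have [s hs] : exists s, Ppi P pi g s != g s.
  apply/not_existsP => H; apply: hpi; apply: funext => s.
  by apply/eqP/negP => /negP /(H s).
have [a ha] := Ppi_det g s hdet.
rewrite lee_fin; apply: le_trans (sn_ub _ s).
rewrite ha gap_norm.
have hna : ~~ pres s a by rewrite /pres -ha.
exact: (bigmin_le_cond (P := fun p : 'I_n * A => ~~ pres p.1 p.2) 1 F (j := (s, a)) hna).
Qed.

Lemma eps_le e : eps_gap P g = e%:E -> e <= 2 * supnorm g.
Proof.
move=> he.
have [[s a] hna] : exists p : 'I_n * A, ~~ pres p.1 p.2.
  apply/not_existsP => H.
  have : eps_gap P g = +oo%E.
    by apply: all_pres_inf => s a; apply/negPn/negP => /(H (s, a)).
  by rewrite he.
apply: le_trans (gap_lb he hna) _.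
have := PV_lb s a g; have := sn_ub g s; rewrite ler_norml => /andP[_ h1].
lra.
Qed.


Lemma eps_fin s a : ~~ pres s a -> (eps_gap P g <= (g s - PV s a g)%:E)%E.
Proof.
move=> hna.
have [bf hbf] : exists bf : 'I_n -> A, forall x, PV x (bf x) g = g x /\ qv h x (bf x) = h x + g x.
  have [bf hbf] := @boolp.choice _ _ (fun x b => PV x b g = g x /\ qv h x b = h x + g x) bell_act.
  by exists bf.
pose c := fun x => if x == s then a else bf x.
pose pi := detp c.
have hpi : Ppi P pi g <> g.
  move=> /(congr1 (fun f => f s)); rewrite Ppi_detp /c eqxx => E.
  by move: hna; rewrite /pres E eqxx.
have H : (eps_gap P g <= (supnorm (fun s => Ppi P pi g s - g s))%:E)%E.
  rewrite /eps_gap; apply: ereal_inf_lbound.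
  by exists pi => //; split => //; apply: detp_det.
apply: le_trans H _; rewrite lee_fin.
apply: sn_le; first exact: gap_ge0.
move=> x; rewrite Ppi_detp /c; case: eqP => [->|_]; first by rewrite gap_norm.
by rewrite (proj1 (hbf x)) subrr normr0 gap_ge0.
Qed.

Definition goodj (j : nat) := eps_gap P g = +oo%E \/
  exists e, eps_gap P g = e%:E /\ 4 * R0 < j%:R * e.

Lemma good_pres j : goodj j -> forall s a, qv (V j) s a = Topt P r a0 (V j) s -> pres s a.
Proof.
move=> hj s a hq; apply/negPn/negP => hna.
have hf := eps_fin hna.
case: hj => [hinf|[e [he hje]]]; first by move: hf; rewrite hinf.
have ge : e <= g s - PV s a g by move: hf; rewrite he lee_fin.
have [b [hb1 hb2]] := bell_act s.
have := amax_ge a0 (qv (V j) s) b; rewrite -Topt_E -hq /qv !PV_V hb1.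
move: hb2; rewrite /qv => hb2.
have := hq_le s a; rewrite /qv => hqa.
have := PV_lb s b (fun x => W j x - h x); rewrite PVB -/(rho j).
have := PV_ub s a (fun x => W j x - h x); rewrite PVB -/(rho j).
have := rho_le j.
have : tk j * e <= tk j * (g s - PV s a g) by apply: ler_wpM2l => //; apply: tk_ge0.
have : tk j * e = j%:R * e / 2 by rewrite /tk; field.
move: hje; rewrite -/R0.
set T := tk j * PV s a g; set T2 := tk j * (g s - PV s a g).
have -> : T2 = tk j * g s - T by rewrite /T2 /T mulrBr.
lra.
Qed.

Lemma Ppi_good j pi : goodj j -> is_policy pi ->
  Tpi P r pi (V j) = Topt P r a0 (V j) -> forall s, Ppi P pi g s = g s.
Proof.
move=> hj [p0 p1] hT s.
rewrite Ppi_E.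
have E : forall a, pi s a * PV s a g = pi s a * g s.
  move=> a; case: (eqVneq (pi s a) 0) => [->|hne]; first by rewrite !mul0r.
  congr (_ * _); apply/eqP; apply: (good_pres hj).
  apply: (wsum_eq (w := pi s) (f := qv (V j) s)) => //.
  - by move=> a'; apply: amax_ge.
  - by rewrite -Tpi_E hT.
under eq_bigr do rewrite E.
by rewrite -mulr_suml p1 mul1r.
Qed.

Definition yv j s := Topt P r a0 (V j) s - tk j * g s - g s.

Lemma y_half i j : goodj i -> forall s, yv i s - yv j s <= supnorm (fun x => W i x - W j x).
Proof.
move=> hi s.
have [a ha] := amax_ex a0 (qv (V i) s).
have hp := good_pres hi (esym ha).
have := amax_ge a0 (qv (V j) s) a.
rewrite /yv !Topt_E ha /qv !PV_V (eqP hp).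
have := PV_ub s a (fun x => W i x - W j x); rewrite PVB.
lra.
Qed.

Lemma y_nonexp i j : goodj i -> goodj j ->
  supnorm (fun s => yv i s - yv j s) <= supnorm (fun s => W i s - W j s).
Proof.
move=> hi hj; apply: sn_le; first exact: sn_ge0.
move=> s; rewrite ler_norml; apply/andP; split; last exact: y_half.
have := @y_half j i hj s.
have -> : supnorm (fun x => W j x - W i x) = supnorm (fun x => W i x - W j x).
  by apply: eq_bigr => x _; rewrite distrC.
lra.
Qed.

Lemma y_x0 m j : supnorm (fun s => yv j s - W m s) <= 2 * R0.
Proof.
apply: sn_le; first by rewrite mulr_ge0 // sn_ge0.
move=> s.
have h1 := d_bound j s.
have h2 := sn_ub (fun s => W m s - h s) s.
have := rho_le j; have := rho_le m.
rewrite /rho in h1 h2 * => q1 q2.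
have -> : yv j s - W m s = (Topt P r a0 (V j) s - tk j * g s - g s - h s) - (W m s - h s).
  by rewrite /yv; ring.
apply: le_trans (ler_normB _ _) _.
lra.
Qed.

Section Erg.
Variable pi : 'I_n -> A -> R.
Hypothesis hpi : is_policy pi.

Lemma Ppi_ext u v s : (forall x, u x = v x) -> Ppi P pi u s = Ppi P pi v s.
Proof. by move=> H; apply: eq_bigr => x _; rewrite H. Qed.

Lemma PpiB u v s : Ppi P pi (fun x => u x - v x) s = Ppi P pi u s - Ppi P pi v s.
Proof. by rewrite /Ppi -sumrB; apply: eq_bigr => x _; rewrite mulrBr. Qed.

Lemma PpiD u v s : Ppi P pi (fun x => u x + v x) s = Ppi P pi u s + Ppi P pi v s.
Proof. by rewrite /Ppi -big_split; apply: eq_bigr => x _; rewrite mulrDr. Qed.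

Lemma Ppi_norm u s : `|Ppi P pi u s| <= supnorm u.
Proof.
rewrite Ppi_E; apply: le_trans (ler_norm_sum _ _ _) _.
have [p0 p1] := hpi.
have -> : supnorm u = \sum_a pi s a * supnorm u by rewrite -mulr_suml p1 mul1r.
apply: ler_sum => a _; rewrite normrM ger0_norm //.
by apply: ler_wpM2l => //; apply: PV_norm.
Qed.

Definition It t u := iter t (Ppi P pi) u.

Lemma ItB t u v s : It t (fun x => u x - v x) s = It t u s - It t v s.
Proof.
elim: t s => [//|t IH] s.
by rewrite /It !iterS -!/(It t _) (Ppi_ext _ IH) PpiB.
Qed.

Lemma ItD t u v s : It t (fun x => u x + v x) s = It t u s + It t v s.
Proof.
elim: t s => [//|t IH] s.
by rewrite /It !iterS -!/(It t _) (Ppi_ext _ IH) PpiD.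
Qed.


Lemma It_fix t u s : (forall x, Ppi P pi u x = u x) -> It t u s = u s.
Proof.
move=> H; elim: t s => [//|t IH] s.
by rewrite /It iterS -/(It t _) (Ppi_ext _ IH) H.
Qed.

Lemma It_norm t u s : `|It t u s| <= supnorm u.
Proof.
elim: t s => [|t IH] s; first exact: sn_ub.
rewrite /It iterS -/(It t _); apply: le_trans (Ppi_norm _ _) _.
by apply: sn_le; [exact: sn_ge0 | exact: IH].
Qed.

Lemma It_tele (u : 'I_n -> R) s T :
  \sum_(t < T) (It t u s - It t.+1 u s) = u s - It T u s.
Proof.
elim: T => [|T IH]; first by rewrite big_ord0 subrr.
by rewrite big_ord_recr /= IH; ring.
Qed.

End Erg.

Lemma gpi_close k pi : is_policy pi -> goodj k ->
  Tpi P r pi (V k) = Topt P r a0 (V k) ->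
  supnorm (fun s => g s - gpi P r pi s) <=
  supnorm (fun s => Topt P r a0 (V k) s - V k s - g s).
Proof.
move=> hpi hk hT.
set E := fun s => Topt P r a0 (V k) s - V k s - g s.
have hg : forall x, Ppi P pi g x = g x by apply: (Ppi_good hk hpi hT).
have hr : rpi r pi = fun x => (g x + E x) + (V k x - Ppi P pi (V k) x).
  apply: funext => x; rewrite /E -(congr1 (fun f => f x) hT) /Tpi; ring.
apply: sn_le; first exact: sn_ge0.
move=> s; rewrite /gpi.
set a := fun T : nat => _.
pose M := 2 * supnorm (V k).
have M0 : 0 <= M by rewrite mulr_ge0 // sn_ge0.
have E0 : 0 <= supnorm E by apply: sn_ge0.
have key : forall T, (0 < T)%N -> `|a T - g s| <= supnorm E + M / T%:R.
  move=> T T0.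
  have hs : \sum_(t < T) It pi t (rpi r pi) s =
     T%:R * g s + \sum_(t < T) It pi t E s + (V k s - It pi T (V k) s).
    rewrite -It_tele -addrA -big_split /=.
    have -> : T%:R * g s = \sum_(t < T) g s by rewrite sumr_const card_ord mulr_natl.
    rewrite -big_split /=; apply: eq_bigr => t _.
    rewrite hr (ItD pi t (fun x => g x + E x)) (ItD pi t g E) (ItB pi t (V k)) It_fix //.
    have -> : It pi t (Ppi P pi (V k)) s = Ppi P pi (It pi t (V k)) s by rewrite /It -iterSr iterS.
    ring.
  have T0' : (T%:R : R) != 0 by rewrite pnatr_eq0 -lt0n.
  have -> : a T - g s = T%:R^-1 * \sum_(t < T) It pi t E s + T%:R^-1 * (V k s - It pi T (V k) s).
    by rewrite /a /= hs; field.
  apply: le_trans (ler_normD _ _) _; apply: lerD.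
    rewrite normrM ger0_norm ?invr_ge0 //.
    apply: le_trans (ler_wpM2l _ (ler_norm_sum _ _ _)) _; first by rewrite invr_ge0.
    have : \sum_(t < T) `|It pi t E s| <= T%:R * supnorm E.
      have -> : T%:R * supnorm E = \sum_(t < T) supnorm E by rewrite sumr_const card_ord mulr_natl.
      by apply: ler_sum => t _; apply: It_norm.
    move=> H; apply: le_trans (ler_wpM2l _ H) _; first by rewrite invr_ge0.
    by rewrite mulrA mulVf // mul1r.
  rewrite normrM ger0_norm ?invr_ge0 // mulrC ler_wpM2r ?invr_ge0 //.
  apply: le_trans (ler_normB _ _) _.
  have := sn_ub (V k) s; have := It_norm hpi T (V k) s; rewrite /M; lra.
have hb : forall T, `|a T| <= `|g s| + supnorm E + M.
  move=> T; case: T => [|T].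
    rewrite /a /= big_ord0 mulr0 normr0.
    by have := normr_ge0 (g s); lra.
  have := key T.+1 isT.
  have : M / T.+1%:R <= M.
    by rewrite ler_pdivrMr ?ltr0n // ler_peMr // ler1n.
  have := ler_normD (a T.+1 - g s) (g s); rewrite subrK.
  move=> h1 h2 h3; apply: le_trans h1 _.
  rewrite addrC -addrA lerD2l; apply: le_trans h3 _.
  by rewrite lerD2l.
exact: (liminf_close E0 M0 key hb).
Qed.

Lemma rnorm_ge0 : 0 <= rnorm r.
Proof.
rewrite /rnorm; apply: (big_ind (fun x => 0 <= x)) => //.
  by move=> x y x0 y0; rewrite le_max x0.
move=> s _; apply: (big_ind (fun x => 0 <= x)) => //.
by move=> x y x0 y0; rewrite le_max x0.
Qed.

Lemma eps_ge0 : (0 <= eps_gap P g)%E.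
Proof.
rewrite /eps_gap; apply: le_ereal_inf_tmp => y [pi _ <-].
by rewrite lee_fin sn_ge0.
Qed.

Lemma exists_m : exists m : nat, m%:R <= Kconst P r g h V0 /\ forall j, (m <= j)%N -> goodj j.
Proof.
rewrite /Kconst /=.
case E: (eps_gap P g) => [e| |].
- have e0 := eps_pos E.
  have e2 := eps_le E.
  set C := 2 * rnorm r + 4 * supnorm V0 + 16 * supnorm (fun s => V0 s - h s) + 2 * supnorm g.
  have C0 : 0 <= C / e.
    rewrite divr_ge0 ?(ltW e0) // /C.
    have := rnorm_ge0; have := sn_ge0 V0; have := sn_ge0 (fun s => V0 s - h s);
    have := sn_ge0 g; lra.
  have [h1 h2] := andP (truncn_itv C0).
  exists (Num.trunc (C / e)); split => // j hj; right; exists e; split => //.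
  have hj' : (Num.trunc (C / e))%:R <= j%:R :> R by rewrite ler_nat.
  have : C / e - 1 < j%:R.
    apply: lt_le_trans hj'; move: h2; rewrite -natr1; lra.
  rewrite ltrBlDr -ltrBlDl -(ltr_pM2r e0) mulrBl divfK ?gt_eqF // mul1r => H.
  rewrite /C in H; rewrite /R0.
  have q1 := rnorm_ge0; have q2 := sn_ge0 V0; have q3 := sn_ge0 (fun s => V0 s - h s).
  clear -H q1 q2 q3 e2. lra.
- by exists 0%N; split => // j _; left.
- by have := eps_ge0; rewrite E.
Qed.

End MDP.

Theorem theorem1 (R : realType) (n : nat) (A : finType) (a0 : A)
  (P : 'I_n -> A -> 'I_n -> R) (r : 'I_n -> A -> R)
  (g h V0 : 'I_n -> R) (pik : nat -> 'I_n -> A -> R) :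
  is_transition P ->
  modified_bellman P r a0 g h ->
  (forall k, is_policy (pik k) /\
     Tpi P r (pik k) (RVI P r a0 V0 k) = Topt P r a0 (RVI P r a0 V0 k)) ->
  forall k : nat, Kconst P r g h V0 < k%:R ->
    supnorm (fun s => g s - gpi P r (pik k) s)
      <= supnorm (fun s => Topt P r a0 (RVI P r a0 V0 k) s - RVI P r a0 V0 k s - g s)
    /\ supnorm (fun s => Topt P r a0 (RVI P r a0 V0 k) s - RVI P r a0 V0 k s - g s)
      <= 4 * supnorm (fun s => V0 s - h s)
         / Num.sqrt (pi * (k%:R - Kconst P r g h V0)).
Proof.
move=> hP hB hpik k hK.
have [m [hmK hgood]] := exists_m hP V0 hB.
have hmk : (m < k)%N by rewrite -(ltr_nat R); apply: le_lt_trans hK.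
have [hpol hT] := hpik k.
split; first exact: (gpi_close hP hB hpol (hgood k (ltnW hmk)) hT).
set x := fun i => W a0 P r g V0 (m + i).
set y := fun i => yv a0 P r g V0 (m + i).
have hx : forall i s, x i.+1 s = 2^-1 * x i s + 2^-1 * y i s.
  by move=> i s; rewrite /x /y addnS (W_S a0 P r g V0 (m + i) s).
have hy : forall i j, supnorm (fun s => y i s - y j s) <= supnorm (fun s => x i s - x j s).
  by move=> i j; apply: (y_nonexp hP hB); apply: hgood; apply: leq_addr.
have hD : forall j, supnorm (fun s => y j s - x 0%N s) <= 2 * R0 h V0.
  by move=> j; rewrite /x /y; apply: (y_x0 hP V0 hB).
have [i hi] : exists i, k = (m + i.+1)%N by exists (k - m).-1; lia.
have KM := KM_bound hx hy hD i.
have -> : supnorm (fun s => Topt P r a0 (RVI P r a0 V0 k) s - RVI P r a0 V0 k s - g s)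
   = supnorm (fun s => y i.+1 s - x i.+1 s).
  apply: eq_bigr => s _; rewrite /x /y /yv /W -hi /V; congr (`| _ |); ring.
apply: le_trans KM _.
have t0 : 0 < k%:R - Kconst P r g h V0 by rewrite subr_gt0.
have ti : k%:R - Kconst P r g h V0 <= i.+1%:R.
  have : k%:R = m%:R + i.+1%:R :> R by rewrite hi natrD.
  lra.
have := ww_le t0 ti.
have R00 : 0 <= R0 h V0 by apply: sn_ge0.
rewrite /R0 in R00 *.
move=> H.
have -> : 2 * supnorm (fun s => V0 s - h s) * (2 * ww R i.+2)
  = 4 * supnorm (fun s => V0 s - h s) * ww R i.+2 by ring.
by apply: ler_wpM2l => //; rewrite mulr_ge0.
Qed.
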